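(* Let $C:\{0,1\}^n\to\{0,1\}^m$ be any map, $q\ge1$, $\varepsilon\in(0,1/2]$. For every $Q\in\binom{[2m]}{q}$, the set $H_Q=\{i\in[n]:Q\in\mathrm{Good}_i\}$ satisfies $|H_Q|\le q/(1-\mathcal H(1/2+\varepsilon/4))$.
   Context: $\mathcal H(p)=-p\log_2p-(1-p)\log_2(1-p)$ is the binary entropy function. For $x\in\{0,1\}^n$, $C'(x)\in\{0,1\}^{2m}$ is $C(x)$ followed by $m$ independent uniformly random bits (independent of $x$). For $i\in[n]$, $\mathrm{Good}_i$ is the set of $Q\in\binom{[2m]}{q}$ for which there exists $f:\{0,1\}^q\to\{0,1\}$ with $\Pr[f(C'(x)_Q)=x_i]\ge1/2+\varepsilon/4$, the probability taken over uniform $x\in\{0,1\}^n$ and the padded random bits; $C'(x)_Q$ is the restriction of $C'(x)$ to $Q$ in increasing order. *)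

(* Defs.v *)
From mathcomp Require Import all_boot all_order all_algebra.
From mathcomp Require Import boolp reals exp.
Set Implicit Arguments. Unset Strict Implicit. Unset Printing Implicit Defensive.
Import Order.TTheory GRing.Theory Num.Theory.
Local Open Scope ring_scope.

Definition log2 {R : realType} (x : R) : R := ln x / ln 2.
Definition binEnt {R : realType} (p : R) : R :=
  - p * log2 p - (1 - p) * log2 (1 - p).

(* C'(x) = C(x) followed by the m padding bits r; positions of [2m] are 'I_(m+m) *)
Definition pad (n m : nat) (C : {ffun 'I_n -> bool} -> {ffun 'I_m -> bool})
  (x : {ffun 'I_n -> bool}) (r : {ffun 'I_m -> bool}) : {ffun 'I_(m + m) -> bool} :=
  [ffun j => match split j with inl a => C x a | inr b => r b end].

(* w_Q : restriction of w to Q, listed in increasing order (enum of a set of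
   ordinals is increasing); indexed by 'I_#|Q| *)
Definition restr (k : nat) (Q : {set 'I_k}) (w : {ffun 'I_k -> bool})
  : {ffun 'I_#|Q| -> bool} := [ffun j => w (enum_val j)].

Definition succProb {R : realType} (n m : nat)
  (C : {ffun 'I_n -> bool} -> {ffun 'I_m -> bool}) (Q : {set 'I_(m + m)})
  (f : {ffun 'I_#|Q| -> bool} -> bool) (i : 'I_n) : R :=
  (#|[set xr : {ffun 'I_n -> bool} * {ffun 'I_m -> bool} |
      f (restr Q (pad C xr.1 xr.2)) == xr.1 i]|)%:R
  / (#|{: {ffun 'I_n -> bool} * {ffun 'I_m -> bool}}|)%:R.

Definition Good {R : realType} (n m q : nat)
  (C : {ffun 'I_n -> bool} -> {ffun 'I_m -> bool}) (eps : R) (i : 'I_n)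
  (Q : {set 'I_(m + m)}) : Prop :=
  #|Q| = q /\ exists f : {ffun 'I_#|Q| -> bool} -> bool,
    1 / 2 + eps / 4 <= succProb C f i.

Definition HQ {R : realType} (n m q : nat)
  (C : {ffun 'I_n -> bool} -> {ffun 'I_m -> bool}) (eps : R)
  (Q : {set 'I_(m + m)}) : {set 'I_n} :=
  [set i | `[< Good q C eps i Q >] ].

(* Main.v *)
Require Import Defs.
From mathcomp Require Import all_boot all_order all_algebra.
From mathcomp Require Import boolp reals exp.
From mathcomp Require Import lra ring.
Import Order.TTheory GRing.Theory Num.Theory.
Local Open Scope ring_scope.

Lemma ln_lt_sub1 (R : realType) (t : R) : 0 < t -> t != 1 -> ln t < t - 1.
Proof.
move=> t0 t1; have h := @expR_gt1Dx R (ln t).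
rewrite lnK ?posrE // in h; have : ln t != 0 by rewrite ln_eq0.
move/h => {}h; lra.
Qed.

Lemma ln_le_sub1 (R : realType) (t : R) : 0 < t -> ln t <= t - 1.
Proof.
move=> t0; have h := @expR_ge1Dx R (ln t); rewrite lnK ?posrE // in h; lra.
Qed.

Lemma ln_prod (R : realType) (I : finType) (P : pred I) (F : I -> R) :
  (forall i, P i -> 0 < F i) -> ln (\prod_(i | P i) F i) = \sum_(i | P i) ln (F i).
Proof.
move=> Fp.
suff [] : 0 < \prod_(i | P i) F i /\ ln (\prod_(i | P i) F i) = \sum_(i | P i) ln (F i) by [].
apply: (big_rec2 (fun s pr => 0 < pr /\ ln pr = s)); first by rewrite ln1 ltr01.
move=> i s pr Pi [pr0 <-]; split; first by rewrite mulr_gt0 // Fp.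
by rewrite lnM // posrE // Fp.
Qed.

Lemma sum_bool_card (R : realType) (T : finType) (b : pred T) :
  \sum_(x : T) ((b x)%:R : R) = (#|[set x | b x]|)%:R.
Proof.
rewrite -sum1_card natr_sum [RHS]big_mkcond /=; apply: eq_bigr => x _.
by rewrite inE; case: (b x).
Qed.

Theorem mainTheorem10 (R : realType) (n m q : nat)
  (C : {ffun 'I_n -> bool} -> {ffun 'I_m -> bool}) (eps : R) :
  (1 <= q)%N -> 0 < eps -> eps <= 1 / 2 ->
  forall Q : {set 'I_(m + m)}, #|Q| = q ->
    (#|HQ q C eps Q|)%:R <= q%:R / (1 - binEnt (1 / 2 + eps / 4)).
Proof.
move=> q1 eps0 epsh Q cQ.
set p := 1 / 2 + eps / 4.
have p_gt : 1 / 2 < p by rewrite /p; lra.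
have p_lt : p < 1 by rewrite /p; lra.
have p0 : 0 < p by lra.
have p1 : 0 < 1 - p by lra.
set H := HQ q C eps Q.
have /choice [g Hg] : forall i : 'I_n, exists f : {ffun 'I_#|Q| -> bool} -> bool,
    i \in H -> p <= succProb C f i.
  move=> i; case: (boolP (i \in H)) => iH; last by exists (fun _ => true).
  move: iH; rewrite inE => /asboolP [_ [f hf]]; by exists f.
pose T := ({ffun 'I_n -> bool} * {ffun 'I_m -> bool})%type.
pose y (w : T) := restr Q (pad C w.1 w.2).
pose F (i : 'I_n) yy (b : bool) : R :=
  if i \in H then (if g i yy == b then 2 * p else 2 * (1 - p)) else 1.
pose G yy (x : {ffun 'I_n -> bool}) := \prod_(i : 'I_n) F i yy (x i).
have Fpos i yy b : 0 < F i yy b.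
  rewrite /F; case: (i \in H) => //; case: (_ == _); lra.
have Gpos yy x : 0 < G yy x by apply: prodr_gt0 => i _.
have Gsum yy : \sum_(x : {ffun 'I_n -> bool}) G yy x = 2 ^+ n.
  rewrite /G -(bigA_distr_bigA (fun i b => F i yy b)) /=.
  rewrite (eq_bigr (fun _ => 2)) ?prodr_const ?card_ord // => i _.
  rewrite big_bool /F; case: (i \in H) => /=; [case: (g i yy) => /=; lra | lra].
pose N : R := (#|{: T}|)%:R.
have N0 : 0 < N by rewrite ltr0n; apply/card_gt0P; exists (finfun (fun _ => true), finfun (fun _ => true)).
have cardY : #|{: {ffun 'I_#|Q| -> bool}}| = (2 ^ q)%N by rewrite card_ffun card_bool card_ord cQ.
have sumG : \sum_(w : T) G (y w) w.1 <= 2 ^+ q * N.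
  apply: (@le_trans _ _ (\sum_(w : T) \sum_(yy : {ffun 'I_#|Q| -> bool}) G yy w.1)).
    apply: ler_sum => w _; rewrite (bigD1 (y w)) //= lerDl.
    by apply: sumr_ge0 => yy _; apply: ltW.
  rewrite exchange_big /=.
  have e yy : \sum_(w : T) G yy w.1 = 2 ^+ n *+ #|{: {ffun 'I_m -> bool}}|.
    rewrite -(pair_bigA _ (fun x (r : {ffun 'I_m -> bool}) => G yy x)) /=.
    rewrite (eq_bigr (fun x => G yy x *+ #|{: {ffun 'I_m -> bool}}|)); last first.
      by move=> x _; rewrite sumr_const.
    by rewrite sumrMnl Gsum.
  rewrite (eq_bigr _ (fun yy _ => e yy)) sumr_const cardY.
  have cn : #|{: {ffun 'I_n -> bool}}| = (2 ^ n)%N by rewrite card_ffun card_bool card_ord.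
  set M := #|{: {ffun 'I_m -> bool}}|.
  rewrite /N card_prod cn -[_ *+ M]mulr_natr -[_ *+ (2 ^ q)%N]mulr_natr natrM !natrX.
  rewrite le_eqVlt; apply/orP; left; apply/eqP; ring.
have q2 : 0 < (2 : R) ^+ q by apply: exprn_gt0.
have lnsum : \sum_(w : T) ln (G (y w) w.1 / 2 ^+ q) <= 0.
  apply: (@le_trans _ _ (\sum_(w : T) (G (y w) w.1 / 2 ^+ q - 1))).
    by apply: ler_sum => w _; apply: ln_le_sub1; rewrite divr_gt0.
  rewrite sumrB -mulr_suml sumr_const.
  have : (\sum_(w : T) G (y w) w.1) / 2 ^+ q <= N by rewrite ler_pdivrMr // mulrC.
  rewrite /N; lra.
pose l2 : R := ln 2.
have l20 : 0 < l2 by apply: ln_gt0; lra.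
pose A := ln (2 * p). pose B := ln (2 * (1 - p)).
have AB : B <= A by rewrite /A /B ler_ln ?posrE; lra.
pose K := p * A + (1 - p) * B.
have K0 : 0 < K.
  have t0 : 0 < (2 * p)^-1 by rewrite invr_gt0; lra.
  have t1 : (2 * p)^-1 != 1.
    apply/eqP => e1; have : 2 * p = 1 by rewrite -[2 * p]invrK e1 invr1.
    lra.
  have hA := @ln_lt_sub1 R _ t0 t1; rewrite lnV ?posrE in hA; last by lra.
  have s0 : 0 < (2 * (1 - p))^-1 by rewrite invr_gt0; lra.
  have hB := @ln_le_sub1 R _ s0; rewrite lnV ?posrE in hB; last by lra.
  have pu : p * (2 * p)^-1 = 1 / 2 by field; lra.
  have pv : (1 - p) * (2 * (1 - p))^-1 = 1 / 2 by field; lra.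
  have m1 : 0 < p * (A - 1 + (2 * p)^-1) by apply: mulr_gt0 => //; rewrite /A; lra.
  have m2 : 0 <= (1 - p) * (B - 1 + (2 * (1 - p))^-1).
    by apply: mulr_ge0; rewrite /B; lra.
  rewrite /K; lra.
have KE : 1 - binEnt p = K / l2.
  rewrite /K /A /B /binEnt /log2 !lnM ?posrE; try lra.
  rewrite -/l2; field; lra.
pose L i yy b : R := if g i yy == b then A else B.
have lnG yy x : ln (G yy x) = \sum_(i in H) L i yy (x i).
  rewrite /G ln_prod // [RHS]big_mkcond /=; apply: eq_bigr => i _.
  rewrite /F /L; case: (i \in H); last by rewrite ln1.
  by case: (_ == _).
have Lbound i : i \in H -> N * K <= \sum_(w : T) L i (y w) (w.1 i).
  move=> iH; have := Hg i iH; rewrite /succProb.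
  set c := #|_|; move=> hc.
  have hc' : p * N <= c%:R by rewrite -ler_pdivlMr.
  have -> : \sum_(w : T) L i (y w) (w.1 i)
      = \sum_(w : T) (B + ((g i (y w) == w.1 i) : bool)%:R * (A - B)).
    by apply: eq_bigr => w _; rewrite /L; case: (_ == _) => /=; ring.
  rewrite big_split /= -mulr_suml sum_bool_card sumr_const -/c.
  have : 0 <= (c%:R - p * N) * (A - B) by apply: mulr_ge0; lra.
  rewrite /K -/N; move=> hh.
  have -> : B *+ #|{: T}| = N * B by rewrite /N mulr_natl.
  lra.
have tot : \sum_(w : T) ln (G (y w) w.1 / 2 ^+ q)
    = \sum_(i in H) \sum_(w : T) L i (y w) (w.1 i) - N * (q%:R * l2).
  rewrite (eq_bigr (fun w => \sum_(i in H) L i (y w) (w.1 i) - q%:R * l2)); last first.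
    move=> w _; rewrite ln_div ?posrE // lnG lnXn; last by lra.
    by rewrite mulr_natl.
  rewrite sumrB exchange_big sumr_const /N mulr_natl.
  by rewrite [_ * (l2 *+ q)]mulr_natl.
have hK : #|H|%:R * (N * K) <= N * (q%:R * l2).
  have : \sum_(i in H) (N * K) <= \sum_(i in H) \sum_(w : T) L i (y w) (w.1 i).
    by apply: ler_sum => i iH; apply: Lbound.
  rewrite sumr_const -mulr_natl; move: lnsum; rewrite tot; lra.
have hK' : #|H|%:R * K <= q%:R * l2.
  rewrite -(ler_pM2l N0); move: hK; rewrite mulrCA; done.
rewrite KE ler_pdivlMr ?divr_gt0 //.
rewrite mulrA ler_pdivrMr //.
Qed.
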